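(* Let $d\ge3$ be odd and $m$ an integer with $d+1<m$. Then for all $1\le i\le m-d$, \[ \eta(d,m+1,i)=\eta(d,m,i)+\eta(d,m,i-1)+\eta(d-2,m-1,i), \] where, by convention, $\eta(d,m,0)=\eta(d,m,m-d)=0$ (so for $i=1$ the identity reads $\eta(d,m+1,1)=\eta(d,m,1)+\eta(d-2,m-1,1)$ and for $i=m-d$ it reads $\eta(d,m+1,m-d)=\eta(d-2,m-1,m-d)+\eta(d,m,m-d-1)$).
   Context: For an odd integer $e\ge1$, an integer $n$ with $e+1<n$, and $1\le i\le n-e-1$, set \[ \eta(e,n,i)=\binom{n-[e/2]-2}{[e/2]+i}\binom{[e/2]+i-1}{[e/2]}, \] and $\eta(e,n,0)=\eta(e,n,n-e)=0$, where $[r]$ denotes the largest integer $\le r$. *)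

(* Defs.v *)
From mathcomp Require Import all_boot.
Set Implicit Arguments. Unset Strict Implicit. Unset Printing Implicit Defensive.

Definition eta (e n i : nat) : nat :=
  if (1 <= i) && (i <= n - e - 1)
  then 'C(n - e./2 - 2, e./2 + i) * 'C(e./2 + i - 1, e./2)
  else 0.

(* Main.v *)
Require Import Defs.
From mathcomp Require Import all_boot.
From mathcomp Require Import zify.

Theorem proposition6p2 (d m i : nat) :
  3 <= d -> odd d -> d + 1 < m -> 1 <= i -> i <= m - d ->
  eta d m.+1 i = eta d m i + eta d m (i - 1) + eta (d - 2) (m - 1) i.
Proof.
move=> d3 od dm i1 im.
have hd : d = (d./2).*2.+1 by rewrite -[LHS]odd_double_half od.
move: (d./2) hd => k hd.
have hk : d./2 = k by rewrite hd; exact: uphalf_double.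
case: k hd hk => [|k] hd hk; first by rewrite hd in d3.
have hk2 : (d - 2)./2 = k.
  have -> : d - 2 = k.*2.+1 by rewrite hd; lia.
  exact: uphalf_double.
rewrite /eta hk hk2.
case: i i1 im => [//|j] _ im.
set N := m - k.+1 - 2.
have e1 : m.+1 - k.+1 - 2 = N.+1 by lia.
have e2 : m - 1 - k - 2 = N by lia.
have e3 : k.+1 + j.+1 - 1 = (k + j).+1 by lia.
have e4 : k + j.+1 - 1 = k + j by lia.
have e5 : k.+1 + (j.+1 - 1) - 1 = k + j by lia.
have e6 : k.+1 + j.+1 = (k+j).+2 by lia.
have e7 : k.+1 + (j.+1 - 1) = (k+j).+1 by lia.
have e8 : k + j.+1 = (k+j).+1 by lia.
rewrite e1 e2 e3 e4 e5 e6 e7 e8.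
have c1 : (1 <= j.+1) && (j.+1 <= m.+1 - d - 1) by apply/andP; split; lia.
have c3 : (1 <= j.+1) && (j.+1 <= m - 1 - (d - 2) - 1) by apply/andP; split; lia.
rewrite c1 c3.
have hd' : d = k * 2 + 3 by rewrite hd -muln2; lia.
rewrite (binS N (k+j).+1) (binS (k+j) k).
clear e1 e2 e3 e4 e5 e6 e7 e8 c1 c3 hk hk2 od d3 hd.
have hN : N = m - k - 3 by lia.
clearbody N.
case: ifP => c2; case: ifP => c4.
- rewrite !mulnDl !mulnDr; lia.
- have -> : 'C(k + j, k.+1) = 0 by apply: bin_small; move/negbT: c4; lia.
  rewrite !mulnDl !mulnDr; lia.
- have -> : 'C(N, (k + j).+2) = 0 by apply: bin_small; move/negbT: c2; lia.
  rewrite !mulnDl !mulnDr; lia.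
- move/negbT: c2; move/negbT: c4; lia.
Qed.
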